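(* Let $G$ be a finite abelian group and $\pi$ a permutation of $G\setminus\{\epsilon\}$ satisfying (i) $\pi^3=\mathrm{id}$, (ii) $\pi(x)^{-1}=\pi^{-1}(x^{-1})$ for all $x\neq\epsilon$, and (iii) $\pi(st)=\pi(t)\,\pi\bigl(\pi(s)^{-1}\pi(t^{-1})\bigr)$ for all non-identity $s,t$ with $s\ne t^{-1}$. Then there is an element $\omega\in G$ such that $s\,\pi(s)\,\pi^{-1}(s)=\omega$ for every $s\in G\setminus\{\epsilon\}$, and $\omega^2=\epsilon$.
   Context: $\epsilon$ denotes the identity element of $G$; $G$ is written multiplicatively. *)

(* Defs.v *)
From mathcomp Require Import all_boot all_fingroup.
Set Implicit Arguments.
Unset Strict Implicit.
Unset Printing Implicit Defensive.

(* Main.v *)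
Require Import Defs.
From mathcomp Require Import all_boot all_fingroup.
Local Open Scope group_scope.

Theorem lemma6p2 (gT : finGroupType) (pi : {perm gT})
  (Gab : abelian [set: gT])
  (pi1 : pi 1 = 1)
  (h3 : forall x : gT, x != 1 -> pi (pi (pi x)) = x)
  (hinv : forall x : gT, x != 1 -> (pi x)^-1 = (pi^-1)%g (x^-1))
  (hfun : forall s t : gT, s != 1 -> t != 1 -> s != t^-1 ->
            pi (s * t) = pi t * pi ((pi s)^-1 * pi (t^-1))) :
  exists omega : gT,
    (forall s : gT, s != 1 -> s * pi s * (pi^-1)%g s = omega) /\ omega ^+ 2 = 1.
Proof.
set Q := (pi^-1)%g.
have C : forall x y : gT, x * y = y * x.
  move=> x y; apply: (centsP Gab); exact: in_setT.
have q1 : Q 1 = 1 by rewrite -{1}pi1 /Q permK.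
have pinv : forall x, pi (x^-1) = (Q x)^-1.
  move=> x; have [->|nx] := eqVneq x 1; first by rewrite invg1 pi1 q1 invg1.
  have nx' : x^-1 != 1 by rewrite eq_invg1.
  by rewrite -(invgK (pi x^-1)) hinv // invgK.
have qinv : forall x, Q (x^-1) = (pi x)^-1.
  move=> x; have := pinv (pi x); rewrite /Q permK => H.
  by rewrite -H permK.
have pp : forall x, pi (pi x) = Q x.
  move=> x; have [->|nx] := eqVneq x 1; first by rewrite pi1 pi1 q1.
  by rewrite -{2}(h3 x nx) /Q permK.
have qq : forall x, Q (Q x) = pi x.
  by move=> x; rewrite -(pp (Q x)) /Q permKV.
have hfun' : forall s t, s != 1 -> t != 1 -> s * t != 1 ->
   pi (s * t) = pi t * (Q (pi s * Q t))^-1.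
  move=> s t ns nt nst.
  have nst' : s != t^-1 by apply: contra nst => /eqP ->; rewrite mulVg.
  rewrite hfun // pinv -invMg.
  by rewrite (C (Q t)) pinv.
set f := fun x => x * pi x * Q x.
have L : forall s t, s != 1 -> t != 1 -> s * t != 1 -> f t = f (s * t).
  move=> s t ns nt nst.
  have nqs : Q s != 1 by apply: contra ns => /eqP H; rewrite -(permKV pi s) -/Q H pi1.
  have npt : pi t != 1 by apply: contra nt => /eqP H; rewrite -(permK pi t) -/Q H q1.
  have ny : Q s * pi t != 1.
    apply: contra nst => /eqP H.
    have : Q s = Q (t^-1) by rewrite qinv -(mulgK (pi t) (Q s)) H mul1g.
    by move/perm_inj => ->; rewrite mulVg.
  have ny' : pi t * Q s != 1 by rewrite C.
  have E1 := hfun' s t ns nt nst.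
  have E2 := hfun' (pi t) (Q s) npt nqs ny'.
  have E3 := hfun' (Q s) (pi t) nqs npt ny.
  rewrite pp qq /Q permKV -/Q (C (Q t)) in E2.
  rewrite pp /Q permKV permK -/Q in E3.
  set a := Q (pi s * Q t) in E1 E2.
  have Pt : pi t = pi (s * t) * a by rewrite E1 -mulgA mulVg mulg1.
  have Qt : Q t = s * a^-1 * Q (s * t).
    rewrite (C (Q s)) E2 in E3.
    by rewrite E3 -mulgA mulVg mulg1.
  rewrite /f Pt Qt.
  rewrite -!mulgA (mulgA a s) (C a s) -(mulgA s) mulKVg.
  by rewrite (mulgA (pi (s * t)) s) (C (pi (s * t)) s) -(mulgA s) (mulgA t s) (C t s) -mulgA.
have const : forall a b, a != 1 -> b != 1 -> f a = f b.
  move=> a b na nb; have [->//|nab] := eqVneq a b.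
  have ns : b * a^-1 != 1 by rewrite -eq_mulgV1 eq_sym.
  by rewrite (L (b * a^-1) a ns na) ?mulgKV.
have [s0 ns0 | all1] := pickP (fun x : gT => x != 1).
  exists (f s0); split; first by move=> s ns; exact: const.
  have ns0' : s0^-1 != 1 by rewrite eq_invg1.
  have fi : f s0^-1 = (f s0)^-1.
    rewrite /f pinv qinv !invMg.
    by rewrite (C (Q s0)^-1) -mulgA (C (Q s0)^-1) mulgA (C s0^-1).
  rewrite expgS expg1 {1}(const s0 s0^-1) // fi mulVg //.
exists 1; split; last by rewrite expg1n.
by move=> s ns; move: (all1 s); rewrite /= ns.
Qed.
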